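(* (1) Figure-eight knot. Let $\Delta(E;t)=-t^2+3t-1$ be the Alexander polynomial of the figure-eight knot $E$. For $u\in\mathbb{C}$ and $y\in\mathbb{C}\setminus\{0\}$ with $y+y^{-1}=2\cosh(u)-1$, put \[ H(E;u,y)=\operatorname{Li}_2\bigl(y^{-1}e^{-u}\bigr)-\operatorname{Li}_2\bigl(y\,e^{-u}\bigr)+\bigl(\log(-y)+\pi\sqrt{-1}\bigr)u, \] where $\operatorname{Li}_2$ is the dilogarithm and the branch of $\log$ is chosen so that $\log(-1)=-\pi\sqrt{-1}$. Then there exist $u\in\mathbb{C}$ and such a $y$ with $H(E;u,y)=0$ and $\Delta(E;e^{u})=0$. (2) Torus knots. Let $a,b>1$ be coprime integers, let $\Delta(T(a,b);t)=\dfrac{(t^{ab}-1)(t-1)}{(t^a-1)(t^b-1)}$ be the Alexander polynomial of the torus knot $T(a,b)$, and define the entire function \[ H\bigl(T(a,b);u\bigr)=\frac{-\bigl(ab(u+2\pi\sqrt{-1})-2\pi\sqrt{-1}\bigr)^2}{4ab},\qquad u\in\mathbb{C}. \] Then the equations $H\bigl(T(a,b);u\bigr)=0$ and $\Delta\bigl(T(a,b);e^{u}\bigr)=0$ have a common root $u\in\mathbb{C}$.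
   Context: Here $\Delta(T(a,b);t)$ is understood as the polynomial in $t$ obtained from the given rational expression (which is a polynomial), and $\Delta(K;e^u)=0$ means this polynomial vanishes at $t=e^u$. The functions $H$ above are the explicit formulas (regarded as functions on all of $\mathbb{C}$) for the quantity $H(K;u)=(u+2\pi\sqrt{-1})\lim_{N\to\infty}\frac{1}{N}\log J_N\bigl(K;\exp((u+2\pi\sqrt{-1})/N)\bigr)$, where $J_N(K;q)$ is the $N$-colored Jones polynomial normalized so that $J_N(\text{unknot};q)=1$. *)

(* Defs.v *)
From HB Require Import structures.
From mathcomp Require Import all_boot all_order all_algebra.
From mathcomp Require Import all_classical all_reals all_analysis.
From mathcomp Require Import complex.

Set Implicit Arguments.
Unset Strict Implicit.
Unset Printing Implicit Defensive.

Import Order.TTheory GRing.Theory Num.Theory.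
Import numFieldNormedType.Exports.
Local Open Scope ring_scope.
Local Open Scope complex_scope.

Section Cdefs.
Variable R : realType.

Definition cexp (z : R[i]) : R[i] :=
  (expR (complex.Re z) * cos (complex.Im z)) +i* (expR (complex.Re z) * sin (complex.Im z)).

Definition ccosh (z : R[i]) : R[i] := (cexp z + cexp (- z)) / 2%:R.

Definition ipi : R[i] := 0 +i* pi.

Definition modc (z : R[i]) : R := Num.sqrt (complex.Re z ^+ 2 + complex.Im z ^+ 2).

(* principal argument, in (-pi, pi] *)
Definition Arg (z : R[i]) : R :=
  if 0 <= complex.Im z then acos (complex.Re z / modc z) else - acos (complex.Re z / modc z).

Definition Log (z : R[i]) : R[i] := ln (modc z) +i* Arg z.

(* argument in [-pi, pi), so that arg' (-1) = - pi *)
Definition Arg' (z : R[i]) : R :=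
  if 0 < complex.Im z then acos (complex.Re z / modc z) else - acos (complex.Re z / modc z).

(* the logarithm branch used in the paper: Im in [-pi, pi),
   so that log' (-1) = - pi * sqrt(-1) *)
Definition log' (z : R[i]) : R[i] := ln (modc z) +i* Arg' z.

Definition Li2 (z : R[i]) : R[i] :=
  let f := fun s : R => Log (1 - s%:C * z) / s%:C in
  - ((Rintegral (@lebesgue_measure R) `[0, 1]%classic (fun s => complex.Re (f s)))
      +i* (Rintegral (@lebesgue_measure R) `[0, 1]%classic (fun s => complex.Im (f s)))).

Definition alexE : {poly R[i]} := - 'X^2 + 3%:R *: 'X - 1.

Definition HE (u y : R[i]) : R[i] :=
  Li2 (y^-1 * cexp (- u)) - Li2 (y * cexp (- u)) + (log' (- y) + ipi) * u.

(* Alexander polynomial of T(a,b): the polynomial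
   (t^{ab}-1)(t-1) / ((t^a-1)(t^b-1)) (exact polynomial division) *)
Definition alexT (a b : nat) : {poly R[i]} :=
  (('X^(a * b) - 1) * ('X - 1)) %/ (('X^a - 1) * ('X^b - 1)).

Definition HT (a b : nat) (u : R[i]) : R[i] :=
  - ((a * b)%:R * (u + 2%:R * ipi) - 2%:R * ipi) ^+ 2 / (4 * (a * b))%:R.

End Cdefs.

(* Main.v *)
Require Import Defs.
From HB Require Import structures.
From mathcomp Require Import all_boot all_order all_algebra.
From mathcomp Require Import all_classical all_reals all_analysis.
From mathcomp Require Import complex.
From mathcomp Require Import ring lra.
Import Order.TTheory GRing.Theory Num.Theory.
Local Open Scope ring_scope.
Local Open Scope complex_scope.

Section S.
Variable R : realType.

Lemma cexpE (x y : R) : cexp (x +i* y) = (expR x * cos y) +i* (expR x * sin y).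
Proof. by []. Qed.

Lemma cexpD (z w : R[i]) : cexp (z + w) = cexp z * cexp w.
Proof.
case: z => x y; case: w => x' y'.
rewrite /cexp /= expRD cosD sinD.
apply/eqP; rewrite eq_complex /=; apply/andP; split; apply/eqP; ring.
Qed.

Lemma cexp0 : cexp 0 = 1 :> R[i].
Proof. by rewrite /cexp /= expR0 cos0 sin0 !mul1r. Qed.

Lemma cexpMn (z : R[i]) k : cexp (z *+ k) = cexp z ^+ k.
Proof.
elim: k => [|k IH]; first by rewrite mulr0n expr0 cexp0.
by rewrite mulrS exprS cexpD IH.
Qed.


Lemma natC_mul (n : nat) (x y : R) : (n%:R : R[i]) * (x +i* y) = (n%:R * x) +i* (n%:R * y).
Proof.
rewrite -(rmorph_nat (real_complex R) n) /=.
apply/eqP; rewrite eq_complex /=; apply/andP; split; apply/eqP; ring.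
Qed.

Lemma complexMn (x y : R) k : (x +i* y) *+ k = (x *+ k) +i* (y *+ k).
Proof.
elim: k => [|k IH]; first by rewrite !mulr0n.
by rewrite !mulrS IH.
Qed.

Lemma cos_ne1 (b : nat) : (1 < b)%N -> cos (pi *+ 2 / b%:R) != 1 :> R.
Proof.
move=> b1; apply/eqP => h.
have bpos : (0 : R) < b%:R by rewrite ltr0n; apply: ltnW.
have b2 : (2 : R) <= b%:R by rewrite ler_nat.
have p0 := @pi_gt0 R.
have hin : (pi : R) *+ 2 / b%:R \in `[0, pi].
  rewrite in_itv /=; apply/andP; split.
    by apply: divr_ge0; [rewrite mulrn_wge0 // ltW | exact: ltW].
  by rewrite ler_pdivrMr // -(mulr_natr pi 2) ler_pM2l.
have h0 : (0:R) \in `[0, pi] by rewrite in_itv /= lexx ltW.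
have e := cos_inj hin h0 (etrans h (esym (@cos0 R))).
have : 0 < (pi : R) *+ 2 / b%:R by apply: divr_gt0; rewrite // pmulrn_rgt0.
by rewrite e ltxx.
Qed.

Lemma dvd_alex (a b : nat) : (1 < a)%N -> (1 < b)%N -> coprime a b ->
  (('X^a - 1) * ('X^b - 1) : {poly R[i]}) %| ('X^(a * b) - 1) * ('X - 1).
Proof.
move=> a1 b1 cab.
set Q : {poly R[i]} := \sum_(i < b) 'X ^+ i.
have hb : ('X^b - 1 : {poly R[i]}) = ('X - 1) * Q by rewrite subrX1.
have cop : coprimep ('X^a - 1 : {poly R[i]}) Q.
  apply: Pdiv.ClosedField.root_coprimep => x.
  rewrite /root !hornerE subr_eq0 => /eqP xa.
  apply/negP => /eqP Qx.
  have xb : x ^+ b = 1.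
    apply/eqP; rewrite -subr_eq0.
    have := congr1 (horner^~ x) hb; rewrite !hornerE => ->.
    by rewrite -/Q Qx mulr0.
  have x1 : x = 1.
    have a0 : (0 < a)%N by apply: ltnW.
    case: (egcdnP b a0) => km kn e _.
    move: e; rewrite (eqP cab) => e.
    have := congr1 (fun k => x ^+ k) e => /=.
    by rewrite (mulnC km) exprM xa expr1n exprD (mulnC kn) exprM xb !expr1n mul1r expr1.
  move: Qx; rewrite x1 /Q horner_sum.
  under eq_bigr do rewrite hornerXn expr1n.
  rewrite sumr_const card_ord => /eqP.
  by rewrite pnatr_eq0 => /eqP b0; move: b1; rewrite b0.
rewrite hb.
have -> : ('X^a - 1) * (('X - 1) * Q) = ('X^a - 1) * Q * ('X - 1) by ring.
apply: dvdp_mul; last exact: dvdpp.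
rewrite Gauss_dvdp //; apply/andP; split.
  by rewrite exprM (subrX1 ('X^a) b) dvdp_mulIl.
apply: (@dvdp_trans _ ('X^b - 1)); first by rewrite hb dvdp_mulIr.
by rewrite mulnC exprM (subrX1 ('X^b) a) dvdp_mulIl.
Qed.

Lemma part2 (a b : nat) : (1 < a)%N -> (1 < b)%N -> coprime a b ->
     exists u : R[i], HT a b u = 0 /\ (alexT R a b).[cexp u] = 0.
Proof.
move=> a1 b1 cab.
have a0 : (0 < a)%N by apply: ltnW.
have b0 : (0 < b)%N by apply: ltnW.
have an0 : (a%:R : R) != 0 by rewrite pnatr_eq0 -lt0n.
have bn0 : (b%:R : R) != 0 by rewrite pnatr_eq0 -lt0n.
have n0 : ((a * b)%:R : R) != 0 by rewrite natrM mulf_neq0.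
set th := (pi : R) *+ 2 / (a * b)%:R.
have nth : (a * b)%:R * th = pi *+ 2 by rewrite mulrC divfK.
set w := 0 +i* th.
have ipi2 : 2%:R * ipi R = 0 +i* (pi *+ 2) :> R[i] by rewrite /ipi natC_mul mulr0 mulr_natl.
exists (w - 2%:R * ipi R); split.
  by rewrite /HT subrK natC_mul mulr0 nth ipi2 subrr expr2 mulr0 oppr0 mul0r.
have -> : cexp (w - 2%:R * ipi R) = cexp w.
  rewrite cexpD ipi2 -[- (_ +i* _)]/(_ +i* _) oppr0 (cexpE 0 (- (pi *+ 2))) expR0 cosN sinN cos2pi sin2pi.
  by rewrite !mul1r oppr0 mulr1.
set z := cexp w.
have zk k : z ^+ k = cexp (0 +i* (th *+ k)) by rewrite -cexpMn complexMn mul0rn.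
have zn : z ^+ (a * b) = 1.
  by rewrite zk -mulr_natr mulrC nth cexpE expR0 cos2pi sin2pi !mul1r.
have zne (c d : nat) : (1 < d)%N -> (c%:R : R) != 0 -> (d%:R : R) != 0 ->
    th = pi *+ 2 / (c * d)%:R -> z ^+ c != 1.
  move=> d1 cn0 dn0 eth.
  rewrite zk eth -mulr_natr.
  have -> : pi *+ 2 / (c * d)%:R * c%:R = pi *+ 2 / d%:R :> R.
    by rewrite natrM; field; rewrite cn0 dn0.
  rewrite cexpE expR0 !mul1r; apply/negP => /eqP h.
  have := congr1 (@complex.Re R) h => /= /eqP.
  by apply/negP; exact: cos_ne1.
have za : z ^+ a != 1 by apply: (zne a b).
have zb : z ^+ b != 1 by apply: (zne b a) => //; rewrite /th mulnC.
have h := congr1 (horner^~ z) (divpK (@dvd_alex a b a1 b1 cab)).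
move: h; rewrite /= !hornerE zn subrr mul0r => /eqP.
rewrite mulf_eq0 mulf_eq0 !subr_eq0 (negbTE za) (negbTE zb) orbF => /eqP.
by move=> /eqP; rewrite orbF => /eqP.
Qed.
Lemma log'N1 : log' (-1 : R[i]) = 0 +i* (- pi).
Proof.
rewrite /log' /Arg' /modc /=.

rewrite oppr0 ltxx expr0n /= addr0 sqrrN expr1n sqrtr1 ln1 divr1 acosN1.
by [].
Qed.


Lemma alexR (x : R) : - x%:C ^+ 2 + 3 * x%:C - 1 = (- x ^+ 2 + 3 * x - 1)%:C.
Proof.
rewrite rmorphB rmorphD rmorphN rmorphXn rmorphM rmorph1 (rmorph_nat _ 3).
by [].
Qed.

Lemma part1 : exists (u y : R[i]), y != 0 /\ y + y^-1 = 2%:R * ccosh u - 1 /\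
     HE u y = 0 /\ (alexE R).[cexp u] = 0.
Proof.
set s := Num.sqrt (5 : R).
have s2 : s ^+ 2 = 5 by rewrite sqr_sqrtr.
have s0 : 0 <= s by rewrite sqrtr_ge0.
set t := (3 + s) / 2.
have t0 : 0 < t by rewrite /t; lra.
have tn0 : t != 0 by rewrite gt_eqF.
have htt : t * ((3 - s) / 2) = 1.
  have -> : t * ((3 - s) / 2) = (9 - s ^+ 2) / 4 by rewrite /t; field.
  by rewrite s2; field.
have ti : t^-1 = (3 - s) / 2 by rewrite -(mulKf tn0 ((3 - s) / 2)) htt mulr1.
have tq : - t ^+ 2 + 3 * t - 1 = 0.
  have -> : - t ^+ 2 + 3 * t - 1 = (- s ^+ 2 + 5) / 4 by rewrite /t; field.
  by rewrite s2 addNr mul0r.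
have ce : cexp (ln t +i* 0) = t%:C.
  by rewrite cexpE cos0 sin0 mulr1 mulr0 lnK.
have ce' : cexp (- (ln t +i* 0)) = t^-1%:C.
  by rewrite -[- (_ +i* _)]/(_ +i* _) oppr0 cexpE cos0 sin0 mulr1 mulr0 expRN lnK.
exists (ln t +i* 0), 1; split; first exact: oner_neq0.
split.
  rewrite invr1 /ccosh mulrC divfK ?pnatr_eq0 // ce ce' ti /t.
  apply/eqP; simpc; rewrite eq_complex /=; apply/andP; split; apply/eqP; [lra | by []].
split.
  rewrite /HE invr1 mul1r subrr add0r log'N1 /ipi.
  by rewrite -[(_ +i* _) + (_ +i* _)]/(_ +i* _) addr0 addNr -[0 +i* 0]/(0 : R[i]) mul0r.
rewrite ce /alexE !hornerE.
by rewrite alexR tq.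
Qed.

End S.

Theorem mainTheorem1 (R : realType) :
  (exists (u y : R[i]), y != 0 /\ y + y^-1 = 2%:R * ccosh u - 1 /\
     HE u y = 0 /\ (alexE R).[cexp u] = 0) /\
  (forall a b : nat, (1 < a)%N -> (1 < b)%N -> coprime a b ->
     exists u : R[i], HT a b u = 0 /\ (alexT R a b).[cexp u] = 0).
Proof.
split; first exact: part1.
exact: part2.
Qed.
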